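(* Let $r,g,a,h,m$ be positive integers with $a\le r$ and $ga+h<gr$, and put $n=rg$. Suppose that $q\ge r$ is a prime power satisfying $q^m\ge \frac{mn}{r}$ and that there is a $q$-ary $[r,r-a,a+1]$ linear code. If (i) $m\ge r$, or (ii) $m<r$ and there exists a $q$-ary $[r,r-m,\ge h+a+1]$ linear code, then there exists an MR $(n,r,h,a)$-LRC over a field of size $\ell=q^{\min\{hm,\frac{nm}{r}\}}$.
   Context: Definition: let $\ell$ be a prime power, $a,g,r,h$ positive integers with $ga+h<gr$, $n=gr$, $k=n-ga-h$. An MR (maximally recoverable) $(n,r,h,a)_\ell$-LRC is an $[n,k]$ linear code over $\mathbb{F}_\ell$ with a parity-check matrix $H\in\mathbb{F}_\ell^{(n-k)\times n}$ of the block form whose first $ga$ rows are block diagonal with diagonal blocks $A_1,\dots,A_g$ (each of size $a\times r$, the $n$ coordinates being split into $g$ consecutive groups of size $r$) and whose last $h$ rows are $(D_1|\cdots|D_g)$ with each $D_i$ of size $h\times r$, such that (i) each $A_i$ generates an $[r,a,r-a+1]_\ell$ MDS code, and (ii) every set of $ag+h$ columns of $H$ consisting of any $a$ columns from each group together with any $h$ further columns is linearly independent over $\mathbb{F}_\ell$. ''An MR $(n,r,h,a)$-LRC over a field of size $\ell$'' means an MR $(n,r,h,a)_\ell$-LRC. *)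

(* Defs.v *)
From HB Require Import structures.
From mathcomp Require Import all_boot all_order all_algebra all_field.
Set Implicit Arguments. Unset Strict Implicit. Unset Printing Implicit Defensive.
Import GRing.Theory.
Local Open Scope ring_scope.

Definition prime_power (q : nat) : Prop :=
  exists p e : nat, prime p /\ (0 < e)%N /\ q = (p ^ e)%N.

Definition wt (F : fieldType) (n : nat) (v : 'rV[F]_n) : nat :=
  #|[set j : 'I_n | v 0 j != 0]|.

(* G is a generator matrix of an [n,k,>=d] linear code over F *)
Definition lin_code_ge (F : fieldType) (n k d : nat) (G : 'M[F]_(k, n)) : Prop :=
  row_free G /\ forall x : 'rV[F]_k, x != 0 -> (d <= wt (x *m G))%N.

Definition lin_code (F : fieldType) (n k d : nat) (G : 'M[F]_(k, n)) : Prop :=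
  lin_code_ge d G /\ exists x : 'rV[F]_k, x != 0 /\ wt (x *m G) = d.

(* Parity-check matrix in block form; rows indexed by ('I_g * 'I_a) + 'I_h
   (local rows: row s of block A_i; global rows: row u of the D_j's),
   columns indexed by 'I_g * 'I_r (column t of group j). *)
Definition lrc_pcm (F : fieldType) (g r a h : nat)
  (A : 'I_g -> 'M[F]_(a, r)) (D : 'I_g -> 'M[F]_(h, r))
  (row : ('I_g * 'I_a) + 'I_h) (col : 'I_g * 'I_r) : F :=
  match row with
  | inl (i, s) => if i == col.1 then A i s col.2 else 0
  | inr u => D col.1 u col.2
  end.

(* MR (n,r,h,a)-LRC over F, n = g*r, given by its block parity-check matrix *)
Definition is_MR_LRC (F : fieldType) (g r a h : nat)
  (A : 'I_g -> 'M[F]_(a, r)) (D : 'I_g -> 'M[F]_(h, r)) : Prop :=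
  (forall i, lin_code (r - a + 1) (A i)) /\
  (* (ii) any ga+h columns with (at least) a in each group are linearly independent *)
  (forall S : {set 'I_g * 'I_r},
     #|S| = (g * a + h)%N ->
     (forall i : 'I_g, (a <= #|[set x in S | x.1 == i]|)%N) ->
     forall c : 'I_g * 'I_r -> F,
       (forall x, x \notin S -> c x = 0) ->
       (forall row, \sum_(x : 'I_g * 'I_r) c x * lrc_pcm A D row x = 0) ->
       forall x, c x = 0).

Definition exists_MR_LRC (l g r a h : nat) : Prop :=
  exists F : finFieldType, #|F| = l /\
    exists (A : 'I_g -> 'M[F]_(a, r)) (D : 'I_g -> 'M[F]_(h, r)), is_MR_LRC A D.

(* Main.v *)
Require Import Defs.
From HB Require Import structures.
From mathcomp Require Import all_boot all_order all_algebra all_field zify.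
Set Implicit Arguments. Unset Strict Implicit. Unset Printing Implicit Defensive.
Import GRing.Theory FinRing.Theory.

Lemma count_lemma (g a h : nat) (s : 'I_g -> nat) :
  (forall i, a <= s i) -> \sum_i s i = g * a + h ->
  (forall i, s i <= a + h) /\ #|[set i | a < s i]| <= h.
Proof.
move=> ha hs.
have e : \sum_i (s i - a) = h.
  have : \sum_i s i = \sum_(i < g) a + \sum_i (s i - a).
    by rewrite -big_split /=; apply: eq_bigr => i _; rewrite subnKC.
  rewrite hs sum_nat_const card_ord => h2; lia.
split.
  move=> i; have : s i - a <= h.
    by rewrite -e (bigD1 i) //= leq_addr.
  move: (ha i); lia.
rewrite -e -sum1_card.
apply: leq_trans (_ : \sum_(i | a < s i) (s i - a) <= _).
  rewrite (eq_bigl (fun i => a < s i)); last by move=> i; rewrite inE.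
  by apply: leq_sum => i; rewrite subn_gt0.
by rewrite [X in _ <= X](bigID (fun i => a < s i)) /= leq_addr.
Qed.

Lemma card_group (g r : nat) (S : {set 'I_g * 'I_r}) (i : 'I_g) :
  #|[set x in S | x.1 == i]| = #|[set j | (i, j) \in S]|.
Proof.
have -> : [set x in S | x.1 == i] = [set (i, j) | j in [set j | (i, j) \in S]].
  apply/setP => [[i' j]]; rewrite !inE /=; apply/andP/imsetP.
    by move=> [hS /eqP ei]; exists j; rewrite ?inE -?ei.
  by move=> [j' hj' [-> ->]]; move: hj'; rewrite inE => ->.
by rewrite card_imset // => j1 j2 [].
Qed.

Lemma sum_groups (g r : nat) (S : {set 'I_g * 'I_r}) :
  \sum_i #|[set j | (i, j) \in S]| = #|S|.
Proof.
rewrite -sum1_card (partition_big (fun p : 'I_g * 'I_r => p.1) predT) //=.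
apply: eq_bigr => i _; rewrite -card_group -sum1_card.
by apply: eq_bigl => p; rewrite inE.
Qed.

Local Open Scope ring_scope.


Definition map_poly_extField (F : fieldType) (L : fieldExtType F) :=
  map_poly (in_alg L) : {poly F} -> {poly L}.
Local Notation "p ^%:A" := (map_poly_extField _ p)
  (format "p ^%:A") : ring_scope.

Lemma ext_field0 (F : finFieldType) (k : nat) : (0 < k)%N ->
  {L : fieldExtType F | #|FinFieldExtType L| = (#|F| ^ k)%N}.
Proof.
move=> k_gt0; set m := (#|F| ^ k)%N.
have F_gt1 := finNzRing_gt1 F.
have m_gt1: (m > 1)%N by rewrite /m -(expn0 #|F|) ltn_exp2l.
have m_gt0 := ltnW m_gt1; have m1_gt0: (m.-1 > 0)%N by rewrite -ltnS prednK.
pose q := 'X^m - 'X; have Dq R: q R = ('X^(m.-1) - 1) * ('X - 0).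
  by rewrite subr0 mulrBl mul1r -exprSr prednK.
have /FinSplittingFieldFor[/= L splitLq]: q F != 0.
  by rewrite Dq monic_neq0 ?rpredM ?monicXsubC ?monicXnsubC.
rewrite /= rmorphB rmorphXn /= map_polyX -/(q L) in splitLq.
have [p pr_p pcharFp] := finPcharP F.
have pcharL: p \in [pchar L] by rewrite pchar_lalg.
have mL0 : m%:R = 0 :> L.
  rewrite /m (card_pprimeChar pcharFp) -expnM natrX.
  rewrite (pcharf0 pcharL) expr0n; case: eqP => // /eqP.
  rewrite muln_eq0 => /orP[]/eqP e0.
    by move: F_gt1; rewrite (card_pprimeChar pcharFp) e0.
  by move: k_gt0; rewrite e0.
pose Fm := FinFieldExtType L; exists L => //.
have /finField_galois_generator[/= a _ Da]: (1 <= {:L})%VS by apply: sub1v.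
pose Em := fixedSpace (a ^+ k)%g; rewrite dimv1 expn1 in Da.
have{splitLq} [zs DqL defL] := splitLq.
have Uzs: uniq zs.
  rewrite -separable_prod_XsubC -(eqp_separable DqL) Dq separable_root andbC.
  rewrite /root !hornerE subr_eq0 eq_sym expr0n gtn_eqF ?oner_eq0 //=.
  rewrite cyclotomic.separable_Xn_sub_1 // -subn1 natrB // mL0 sub0r oppr_eq0.
  exact: oner_neq0.
suffices /eq_card->: Fm =i zs.
  apply: succn_inj; rewrite (card_uniqP _) //= -(size_prod_XsubC _ id).
  by rewrite -(eqp_size DqL) size_polyDl size_polyXn // size_polyN size_polyX.
have in_zs: zs =i Em.
  move=> z; rewrite -root_prod_XsubC -(eqp_root DqL) (sameP fixedSpaceP eqP).
  rewrite /root !hornerE subr_eq0 /= /m; congr (_ == z).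
  elim: (k) => [|i IHi]; first by rewrite gal_id.
  by rewrite expgSr expnSr exprM IHi galM ?Da ?memvf.
suffices defEm: Em = {:L}%VS by move=> z; rewrite in_zs defEm memvf.
apply/eqP; rewrite eqEsubv subvf -defL -[Em]subfield_closed agenvS //.
by rewrite subv_add sub1v; apply/span_subvP=> z; rewrite in_zs.
Qed.

Lemma ext_field (F : finFieldType) (k : nat) : (0 < k)%N ->
  {L : fieldExtType F | #|FinFieldExtType L| = (#|F| ^ k)%N /\ \dim {:L} = k}.
Proof.
move=> k0; have [L hL] := ext_field0 F k0; exists L; split => //.
have h1 := @card_vspace F (finvect_type L) _ fullv.
have h2 := @card_vspacef F (finvect_type L) _.
have F1 := finNzRing_gt1 F.
apply: (expnI F1); rewrite -hL -h1 h2 //.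
Qed.


Lemma vdm (K : fieldType) (I : finType) (pts : I -> K) (z : I -> K) (d : nat) :
  injective pts -> (#|[set l | z l != 0%R]| <= d)%N ->
  (forall s, (s < d)%N -> \sum_l z l * pts l ^+ s = 0) -> forall l, z l = 0.
Proof.
move=> inj hcard hs l0; apply/eqP; apply/negPn/negP => nz.
set T := [set l | z l != 0] :\ l0.
pose P := \prod_(l <- enum T) ('X - (pts l)%:P).
have szP : (size P <= d)%N.
  rewrite size_prod_XsubC -cardE.
  move: hcard; rewrite (cardsD1 l0) inE nz /=. by [].
have key: \sum_l z l * P.[pts l] = 0.
  under eq_bigr do rewrite horner_coef mulr_sumr.
  rewrite exchange_big /= big1 // => i _.
  under eq_bigr do rewrite mulrCA.
  rewrite -mulr_sumr hs ?mulr0 //.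
  exact: leq_trans (ltn_ord i) szP.
move: key; rewrite (bigD1 l0) //= big1 ?addr0; last first.
  move=> l nl; case: (eqVneq (z l) 0) => [->|nzl]; first by rewrite mul0r.
  rewrite /P horner_prod (big_rem l) /=; last by rewrite mem_enum !inE nl nzl.
  rewrite !hornerE subrr /=; exact: (etrans (congr1 (fun x => x * _) (mulr0 _)) (mul0r _)).
move/eqP; rewrite mulf_eq0 (negPf nz) /= /P horner_prod.
apply/negP; rewrite big_enum /=; apply/prodf_neq0 => l; rewrite !inE => /andP[nl _].
by rewrite !hornerE subr_eq0; apply: contra nl => /eqP /inj ->.
Qed.

Lemma roots0 (K : fieldType) (I : finType) (pts : I -> K) (J : {set I}) (a : nat)
    (nu : 'I_a -> K) :
  injective pts -> (a <= #|J|)%N ->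
  (forall j, j \in J -> \sum_(s < a) nu s * pts j ^+ s = 0) -> forall s, nu s = 0.
Proof.
move=> inj hJ hs s.
pose P := \poly_(i < a) (if insub i is Some o then nu o else 0).
have P0 : P = 0.
  apply: (@roots_geq_poly_eq0 _ P [seq pts j | j <- enum J]).
  - apply/allP => y /mapP[j]; rewrite mem_enum => jJ ->.
    rewrite /root horner_poly; apply/eqP; rewrite -[RHS](hs j jJ); apply: eq_bigr => i _.
    by rewrite valK.
  - by rewrite map_inj_uniq ?enum_uniq.
  - by rewrite size_map -cardE (leq_trans (size_poly _ _)).
have := congr1 (fun p : {poly K} => p`_s) P0.
by rewrite coef_poly coef0 ltn_ord valK.
Qed.


Lemma wt_compl (K : fieldType) (r : nat) (v : 'rV[K]_r) :
  wt v = (r - #|[set j | v 0%R j == 0%R]|)%N.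
Proof.
have h : (#|[set j | v 0%R j == 0%R]| + wt v)%N = r.
  apply: (etrans _ (etrans (cardsC [set j | v 0%R j == 0%R]) (card_ord r))).
  by congr addn; apply: eq_card => j; rewrite !inE.
by move: (wt v) (#|[set j | v 0%R j == 0%R]|) h => y x h; lia.
Qed.

Lemma local_mds (K : fieldType) (r a : nat) (y : 'I_r -> K) :
  injective y -> (0 < a)%N -> (a <= r)%N ->
  lin_code (r - a + 1) (\matrix_(s < a, j < r) y j ^+ s).
Proof.
move=> inj a0 ar; set A := \matrix_(s < a, j < r) y j ^+ s.
have ev : forall x : 'rV_a, forall j, (x *m A) 0 j = \sum_(s < a) x 0 s * y j ^+ s.
  by move=> x j; rewrite mxE; apply: eq_bigr => s _; rewrite mxE.
split; first split.
- apply: inj_row_free => v hv; apply/rowP => s; rewrite mxE.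
  apply: (@roots0 _ _ y [set: 'I_r] a (fun s => v 0 s)) => //.
    by rewrite cardsT card_ord.
  by move=> j _; rewrite -ev hv mxE.
- move=> x nx; rewrite wt_compl.
  have : (#|[set j | (x *m A) 0%R j == 0%R]| < a)%N.
    rewrite ltnNge; apply/negP => ha; move/eqP: nx; apply; apply/rowP => s.
    rewrite mxE; apply: (@roots0 _ _ y _ a (fun s => x 0 s) inj ha).
    by move=> j; rewrite inE -ev => /eqP.
  have := max_card [set j | (x *m A) 0%R j == 0%R]; rewrite card_ord.
  move=> h1 h2.
  have h3 : (r - a + 1 <= r - #|[set j | (x *m A) 0%R j == 0%R]|)%N by lia.
  exact: h3.
- have ha1 : (a.-1 <= r)%N by rewrite (leq_trans (leq_pred a)).
  set Z0 := [set widen_ord ha1 j | j : 'I_a.-1].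
  have cZ0 : #|Z0| = a.-1 by rewrite card_imset ?card_ord //; by move=> u v /(congr1 val) /= /val_inj.
  pose P := \prod_(c <- [seq y j | j <- enum Z0]) ('X - c%:P).
  have szP : size P = a by rewrite size_prod_XsubC size_map -cardE cZ0 prednK.
  exists (\row_(s < a) P`_s); split.
    have hpa : (a.-1 < a)%N by rewrite ltn_predL.
    apply/eqP => /rowP /(_ (Ordinal hpa)); rewrite !mxE /=.
    have -> : a.-1 = (size P).-1 by rewrite szP.
    rewrite -/(lead_coef P) (monicP (monic_prod_XsubC _ _ _)) => /eqP.
    by rewrite oner_eq0.
  rewrite wt_compl.
  have -> : [set j | (\row_(s < a) P`_s *m A) 0 j == 0] = Z0.
    apply/setP => j; rewrite inE ev.
    rewrite (eq_bigr (fun s : 'I_a => P`_s * y j ^+ s)); last by move=> s _; rewrite mxE.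
    rewrite -horner_coef_wide ?szP // -/(root P (y j)) root_prod_XsubC.
    by rewrite (mem_map inj) mem_enum.
  rewrite cZ0; apply/eqP; rewrite -(eqn_add2r 0) ; apply/eqP.
  lia.
Qed.

Lemma singleton (K : fieldType) (r k d : nat) (G : 'M[K]_(k, r)) :
  (0 < k)%N -> (k <= r)%N -> lin_code_ge d G -> (d <= r - k + 1)%N.
Proof.
move=> k0 kr [rfG hd].
have hk : (k.-1 <= r)%N by rewrite (leq_trans (leq_pred k)).
pose G' := \matrix_(i < k, j < k.-1) G i (widen_ord hk j).
have nrf : ~~ row_free G'.
  rewrite /row_free; apply/negP => /eqP h.
  have := rank_leq_col G'; rewrite h; rewrite leqNgt ltn_predL k0 //.
move: nrf; rewrite -kermx_eq0 => /rowV0Pn [v /sub_kermxP vG' nv].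
have nvG : v *m G != 0 by rewrite mulmx_free_eq0.
have := hd _ nv; rewrite wt_compl.
set Z0 := [set widen_ord hk j | j : 'I_k.-1].
have cZ0 : #|Z0| = k.-1 by rewrite card_imset ?card_ord //; by move=> u w /(congr1 val) /= /val_inj.
have sub : (#|Z0| <= #|[set j | (v *m G) 0%R j == 0%R]|)%N.
  apply: subset_leq_card; apply/subsetP => j /imsetP [j' _ ->]; rewrite inE.
  apply/eqP; rewrite -[RHS](_ : (v *m G') 0%R j' = 0); last by rewrite vG' mxE.
  by rewrite !mxE; apply: eq_bigr => i _; rewrite mxE.
move: sub; rewrite cZ0 => sub hd'.
have h3 : (r - #|[set j | (v *m G) 0%R j == 0%R]| <= r - k + 1)%N by lia.
exact: leq_trans hd' h3.
Qed.


Lemma sum_pair_pick (T : nmodType) g r (p : 'I_g * 'I_r) (i : 'I_g) (G : 'I_r -> T) :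
  \sum_j (if p == (i, j) then G j else 0) = if p.1 == i then G p.2 else 0.
Proof.
case: p => i' j' /=; case: eqP => [->|ne].
  rewrite (bigD1 j') //= eqxx big1 ?addr0 // => j nj.
  by rewrite xpair_eqE eqxx /= eq_sym (negPf nj).
by apply: big1 => j _; rewrite xpair_eqE; case: eqP.
Qed.

Lemma dim_lemma (Fq : fieldType) (g r a : nat) (S : {set 'I_g * 'I_r})
   (x : 'I_r -> Fq) :
  exists k0 : nat, (#|S| - g * a <= k0)%N /\
  exists f : 'rV[Fq]_k0 -> 'I_g -> 'I_r -> Fq,
    [/\ (forall y i j, (i, j) \notin S -> f y i j = 0),
        (forall y i s, (s < a)%N -> \sum_j f y i j * x j ^+ s = 0),
        (forall y1 y2 i j, f (y1 - y2) i j = f y1 i j - f y2 i j) &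
        (forall y, (forall i j, f y i j = 0) -> y = 0)].
Proof.
pose es (l : 'I_#|S|) : 'I_g * 'I_r := enum_val l.
pose pc (k : 'I_#|{: 'I_g * 'I_a}|) : ('I_g * 'I_a)%type := enum_val k.
pose B : 'M[Fq]_(#|S|, #|{: 'I_g * 'I_a}|) := \matrix_(l, k)
   (if (es l).1 == (pc k).1 then x (es l).2 ^+ (pc k).2 else 0).
pose K0 := row_base (kermx B).
exists (\rank (kermx B)); split.
  rewrite mxrank_ker; have := rank_leq_col B.
  have e : #|{: 'I_g * 'I_a}| = (g * a)%N by rewrite card_prod !card_ord.
  move: (\rank B) => rB; rewrite e => h; lia.
pose f (y : 'rV[Fq]_(\rank (kermx B))) i j := \sum_(l | es l == (i, j)) (y *m K0) 0 l.
exists f; split.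
- move=> y i j nS; apply: big_pred0 => l; apply/negP => /eqP e.
  by move: nS; rewrite -e enum_valP.
- move=> y i s hs; rewrite /f.
  under eq_bigr do rewrite mulr_suml.
  rewrite (eq_bigr (fun j => \sum_l (if es l == (i, j) then (y *m K0) 0 l * x j ^+ s else 0))); last first.
    by move=> j _; rewrite big_mkcond.
  rewrite exchange_big /=.
  under eq_bigr do rewrite (sum_pair_pick _ i (fun j => (y *m K0) 0 _ * x j ^+ s)).
  have vB : (y *m K0) *m B = 0.
    apply/sub_kermxP; apply: submx_trans (submxMl _ _) _.
    by rewrite eq_row_base.
  have := congr1 (fun M : 'rV[Fq]_#|{: 'I_g * 'I_a}| => M 0 (enum_rank (i, Ordinal hs))) vB.
  rewrite !mxE => e; rewrite -[RHS]e; apply: eq_bigr => l _; rewrite [B _ _]mxE /pc enum_rankK /=.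
  by case: ifP => _; rewrite ?mulr0.
- move=> y1 y2 i j; rewrite /f mulmxBl -sumrB; apply: eq_bigr => l _.
  by rewrite !mxE.
- move=> y hy; apply: (row_free_inj (row_base_free (kermx B))).
  rewrite mul0mx; apply/rowP => l; rewrite mxE.
  have := hy (es l).1 (es l).2; rewrite /f -surjective_pairing.
  rewrite (big_pred1 l); last by move=> l'; rewrite /= /es (inj_eq enum_val_inj).
  by move=> e; move: e; rewrite !mxE.
Qed.


Lemma square_sys (K : fieldType) (R C : finType) (S : {set C}) (H : R -> C -> K) :
  #|S| = #|R| ->
  (forall w : R -> K, (forall y, y \in S -> \sum_rho w rho * H rho y = 0) ->
     forall rho, w rho = 0) ->
  forall c : C -> K, (forall y, y \notin S -> c y = 0) ->
  (forall rho, \sum_y c y * H rho y = 0) -> forall y, c y = 0.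
Proof.
move=> hSR hw c hc hH y0.
pose es (l : 'I_#|S|) : C := enum_val l.
pose er (l : 'I_#|S|) : R := enum_val (cast_ord hSR l).
pose ei (rho : R) : 'I_#|S| := cast_ord (esym hSR) (enum_rank rho).
have erK : cancel er ei by move=> k; rewrite /er /ei enum_valK cast_ordK.
have eiK : cancel ei er by move=> rho; rewrite /er /ei cast_ordKV enum_rankK.
have sumR : forall F : R -> K, \sum_rho F rho = \sum_k F (er k).
  by move=> F; rewrite (reindex er) //; exists ei => ? _.
have sumC : forall F : C -> K, (forall y, y \notin S -> F y = 0) ->
    \sum_y F y = \sum_l F (es l).
  move=> F hF; rewrite (bigID (mem S)) /= [X in _ + X]big1 ?addr0; last first.
    by move=> y /hF.
  by rewrite (big_enum_val F).
pose M : 'M[K]_#|S| := \matrix_(k, l) H (er k) (es l).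
case: (eqVneq (c y0) 0) => // nz; exfalso.
have y0S : y0 \in S by apply: contraT => /hc e; move: nz; rewrite e eqxx.
pose v : 'rV_#|S| := \row_l c (es l).
have vM : v *m M^T = 0.
  apply/rowP => k; rewrite !mxE -[RHS](hH (er k)) (sumC (fun y => c y * H (er k) y)).
    by apply: eq_bigr => l _; rewrite !mxE.
  by move=> y /hc ->; rewrite mul0r.
have nv : v != 0.
  apply/eqP => /rowP /(_ (enum_rank_in y0S y0)); rewrite !mxE /es enum_rankK_in //.
  by move/eqP; rewrite (negPf nz).
have : \det M^T == 0 by apply/det0P; exists v.
rewrite det_tr => /det0P [w nw wM].
pose om (rho : R) := w 0 (ei rho).
have om0 : forall rho, om rho = 0.
  apply: hw => y yS.
  rewrite (sumR (fun rho => om rho * H rho y)).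
  have := congr1 (fun N : 'rV[K]_#|S| => N 0 (enum_rank_in yS y)) wM.
  rewrite !mxE => e; rewrite -[RHS]e; apply: eq_bigr => k _.
  by rewrite /om erK mxE /es enum_rankK_in.
move/eqP: nw; apply; apply/rowP => k; rewrite mxE.
by have := om0 (er k); rewrite /om erK.
Qed.


Lemma frob_pow (L : fieldType) (q : nat)
  (frob : forall y z : L, (y + z) ^+ q = y ^+ q + z ^+ q) u :
  forall y z : L, (y + z) ^+ (q ^ u) = y ^+ (q ^ u) + z ^+ (q ^ u).
Proof.
elim: u => [|u IH] y z; first by rewrite !expn0 !expr1.
by rewrite expnSr !exprM IH frob.
Qed.

Lemma frob_sum (L : fieldType) (q : nat) (q0 : (0 < q)%N)
  (frob : forall y z : L, (y + z) ^+ q = y ^+ q + z ^+ q) u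
  (I : finType) (F : I -> L) :
  (\sum_k F k) ^+ (q ^ u) = \sum_k F k ^+ (q ^ u).
Proof.
apply: (big_morph (fun y => y ^+ (q ^ u)) (frob_pow frob u)).
by rewrite expr0n expn_eq0 (gtn_eqF q0).
Qed.

Lemma frob_c (Fq : finFieldType) (L : fieldType) (iota : {rmorphism Fq -> L}) u c :
  iota c ^+ (#|Fq| ^ u) = iota c.
Proof.
elim: u => [|u IH]; first by rewrite expn0 expr1.
by rewrite expnSr exprM IH -rmorphXn expf_card.
Qed.

Lemma mr_core (Fq : finFieldType) (L : fieldType) (iota : {rmorphism Fq -> L})
  (g r a h m : nat) (x : 'I_r -> Fq) (gam : 'I_g -> 'I_r -> L) :
  injective x -> (0 < a)%N -> (a <= r)%N -> (0 < h)%N ->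
  (minn r (a + h) <= m)%N ->
  (forall y z : L, (y + z) ^+ #|Fq| = y ^+ #|Fq| + z ^+ #|Fq|) ->
  (forall z : 'I_g -> 'I_r -> Fq,
      (#|[set i | [exists j, z i j != 0%R]]| <= minn h g)%N ->
      (forall i, #|[set j | z i j != 0%R]| <= m)%N ->
      \sum_i \sum_j iota (z i j) * gam i j = 0 -> forall i j, z i j = 0) ->
  is_MR_LRC (fun _ : 'I_g => \matrix_(s < a, j < r) iota (x j) ^+ s)
            (fun i => \matrix_(u < h, j < r) gam i j ^+ (#|Fq| ^ u)).
Proof.
move=> injx a0 ar h0 hm frob DES.
set q := #|Fq|.
have q1 : (1 < q)%N := finNzRing_gt1 Fq.
have q0 : (0 < q)%N := ltnW q1.
have injy : injective (fun j => iota (x j)) by apply: inj_comp (fmorph_inj iota) injx.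
split; first by move=> i; apply: local_mds.
move=> S hS hSi.
apply: square_sys.
  by rewrite hS card_sum card_prod !card_ord.
move=> w hw.
pose nu i s := w (inl (i, s)); pose la u := w (inr u).
have eqS : forall i j, (i, j) \in S ->
    \sum_(s < a) nu i s * iota (x j) ^+ s + \sum_(u < h) la u * gam i j ^+ (q ^ u) = 0.
  move=> i j ijS; have := hw _ ijS; rewrite big_sumType /= => e; rewrite -[RHS]e.
  congr (_ + _); last by apply: eq_bigr => u _; rewrite /= mxE.
  rewrite (eq_bigr (fun p : 'I_g * 'I_a => (fun i' s => if i' == i then nu i s * iota (x j) ^+ s else 0) p.1 p.2)); last first.
    move=> [i' s] _ /=; case: eqP => [->|]; rewrite ?mxE ?mulr0 //.
  rewrite -(pair_bigA _ (fun i' s => if i' == i then nu i s * iota (x j) ^+ s else 0)) /=.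
  rewrite (bigD1 i) //= [X in _ + X]big1 ?addr0; last first.
    by move=> i' ni'; apply: big1 => s _; rewrite (negPf ni').
  by apply: eq_bigr => s _; rewrite eqxx.
pose Si i := [set j | (i, j) \in S].
have cSi : forall i, (a <= #|Si i|)%N by move=> i; rewrite /Si -card_group; exact: hSi.
have [Sbound Scount] := count_lemma cSi (etrans (sum_groups S) hS).
pose Lam (y : L) := \sum_(u < h) la u * y ^+ (q ^ u).
have Lam_sum : forall (I : finType) (F : I -> L), Lam (\sum_k F k) = \sum_k Lam (F k).
  move=> I F; rewrite /Lam; under eq_bigr do rewrite (frob_sum q0 frob) mulr_sumr.
  by rewrite exchange_big.
have Lam_sc : forall c y, Lam (iota c * y) = iota c * Lam y.
  move=> c y; rewrite /Lam mulr_sumr; apply: eq_bigr => u _.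
  by rewrite exprMn frob_c mulrCA.
have [k0 [hk0 [f [fS floc fadd f0]]]] := @dim_lemma _ _ _ a S x.
pose Ga (z : 'I_g -> 'I_r -> Fq) := \sum_i \sum_j iota (z i j) * gam i j.
have wSi : forall y i, (#|[set j | f y i j != 0%R]| <= #|Si i|)%N.
  move=> y i; apply: subset_leq_card; apply/subsetP => j; rewrite !inE.
  by apply: contraR => /fS ->; rewrite eqxx.
have fzero : forall y i, (#|Si i| <= a)%N -> forall j, f y i j = 0.
  move=> y i hi; apply: (@vdm _ _ x (f y i) a) => //.
    exact: leq_trans (wSi y i) hi.
  by move=> s hs; apply: floc.
have inj : forall y, Ga (f y) = 0 -> y = 0.
  move=> y hy; apply: f0; apply: DES => //.
  - rewrite leq_min; apply/andP; split; last by rewrite (leq_trans (max_card _)) ?card_ord.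
    apply: leq_trans Scount; apply: subset_leq_card; apply/subsetP => i; rewrite !inE.
    move=> /existsP [j nz]; rewrite ltnNge; apply/negP => hi.
    by rewrite fzero ?eqxx in nz.
  - move=> i; apply: leq_trans hm; rewrite leq_min; apply/andP; split.
      by rewrite (leq_trans (wSi y i)) // (leq_trans (max_card _)) ?card_ord.
    exact: leq_trans (wSi y i) (Sbound i).
have GaB : forall y1 y2, Ga (f (y1 - y2)) = Ga (f y1) - Ga (f y2).
  move=> y1 y2; rewrite /Ga -sumrB; apply: eq_bigr => i _; rewrite -sumrB.
  by apply: eq_bigr => j _; rewrite fadd rmorphB mulrBl.
have roots : forall y, Lam (Ga (f y)) = 0.
  move=> y; rewrite /Ga Lam_sum.
  under eq_bigr do rewrite Lam_sum.
  apply: big1 => i _.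
  transitivity (- \sum_j iota (f y i j) * \sum_(s < a) nu i s * iota (x j) ^+ s).
    rewrite -sumrN; apply: eq_bigr => j _; rewrite Lam_sc -mulrN.
    case: (boolP ((i, j) \in S)) => hij; last by rewrite fS // rmorph0 !mul0r.
    congr (_ * _); apply/eqP; rewrite -addr_eq0 addrC; exact/eqP/(eqS _ _ hij).
  apply/eqP; rewrite oppr_eq0; apply/eqP.
  under eq_bigr do rewrite mulr_sumr.
  rewrite exchange_big /=; apply: big1 => s _.
  transitivity (nu i s * iota (\sum_j f y i j * x j ^+ s)); last first.
    by rewrite (floc y i s (ltn_ord s)) rmorph0 mulr0.
  rewrite rmorph_sum mulr_sumr; apply: eq_bigr => j _.
  by rewrite rmorphM rmorphXn mulrCA.
pose P : {poly L} := \sum_(u < h) la u *: 'X^(q ^ u).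
have hP : forall y, P.[y] = Lam y.
  move=> y; rewrite /P horner_sum; apply: eq_bigr => u _; by rewrite hornerZ hornerXn.
have szP : (size P <= (q ^ h.-1).+1)%N.
  rewrite /P; apply: (big_ind (fun p : {poly L} => size p <= (q ^ h.-1).+1)%N).
  - by rewrite size_poly0.
  - by move=> p1 p2 h1 h2; rewrite (leq_trans (size_polyD _ _)) // geq_max h1 h2.
  - move=> u _; rewrite (leq_trans (size_scale_leq _ _)) // size_polyXn ltnS.
    by rewrite leq_pexp2l // -ltnS prednK.
have P0 : P = 0.
  apply: (@roots_geq_poly_eq0 _ P [seq Ga (f y) | y <- enum {: 'rV[Fq]_k0}]).
  - by apply/allP => z /mapP [y _ ->]; rewrite /root hP roots.
  - rewrite map_inj_uniq ?enum_uniq // => y1 y2 e; apply/eqP; rewrite -subr_eq0.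
    by apply/eqP; apply: inj; rewrite GaB e subrr.
  - rewrite size_map -cardE card_mx mul1n (leq_trans szP) //.
    apply: leq_trans (_ : q ^ h <= q ^ k0)%N.
      by rewrite ltn_exp2l // prednK.
    by rewrite leq_pexp2l //; move: hk0; rewrite hS; lia.
have la0 : forall u, la u = 0.
  move=> u; have := congr1 (fun p : {poly L} => p`_(q ^ u)) P0.
  rewrite coef0 /P coef_sum (bigD1 u) //= big1 ?addr0.
    by rewrite coefZ coefXn eqxx mulr1.
  move=> u' nu'; rewrite coefZ coefXn.
  have : (q ^ u != q ^ u')%N.
    by rewrite (inj_eq (expnI q1)); apply: contra nu' => /eqP e; apply/eqP/val_inj.
  by move/negPf ->; rewrite mulr0.
have nu0 : forall i s, nu i s = 0.
  move=> i; apply: (@roots0 _ _ (fun j => iota (x j)) (Si i)) => //.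
  move=> j; rewrite inE => hij; have := eqS _ _ hij.
  by rewrite [X in _ + X]big1 ?addr0 // => u _; rewrite la0 mul0r.
by case=> [[i s]|u]; [exact: nu0 | exact: la0].
Qed.


Theorem theorem3p7 (r g a h m q : nat) :
  (0 < r)%N -> (0 < g)%N -> (0 < a)%N -> (0 < h)%N -> (0 < m)%N ->
  (a <= r)%N -> (g * a + h < g * r)%N ->
  prime_power q -> (r <= q)%N ->
  ((m * (r * g)) %/ r <= q ^ m)%N ->
  (exists (Fq : finFieldType) (G : 'M[Fq]_(r - a, r)),
      #|Fq| = q /\ lin_code (a + 1) G) ->
  ((r <= m)%N \/
   ((m < r)%N /\ exists (Fq : finFieldType) (G : 'M[Fq]_(r - m, r)),
      #|Fq| = q /\ lin_code_ge (h + a + 1) G)) ->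
  exists_MR_LRC (q ^ minn (h * m) ((r * g) * m %/ r)) g r a h.
Proof.
move=> r0 g0 a0 h0 m0 ar gah pq rq hqm [Fq [G [cardFq _]]] hcase.
have am : (minn r (a + h) <= m)%N.
  case: hcase => [rm | [mr [Fq' [G' [_ lcG']]]]].
    exact: leq_trans (geq_minl _ _) rm.
  have := singleton _ _ lcG'.
  rewrite subn_gt0 mr leq_subr => /(_ isT isT) hs.
  have : (a + h <= m)%N by lia.
  exact: leq_trans (geq_minr _ _).
have gm : (m * (r * g) %/ r = m * g)%N by rewrite mulnCA mulKn.
have hg' : (g <= q ^ m)%N.
  apply: leq_trans hqm; rewrite gm leq_pmull //.
set t := minn h g.
have t0 : (0 < t)%N by rewrite leq_min h0 g0.
have [E [cE dE]] := ext_field Fq m0.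
pose E' := FinFieldExtType E.
have [L [cL dL]] := ext_field E' t0.
exists (FinFieldExtType L); split.
  rewrite cL cE cardFq -expnM; congr (q ^ _)%N.
  rewrite -mulnA mulKn // /t /minn ltn_pmul2r //; case: ifP => _; apply: mulnC.
have hr : (r <= #|Fq|)%N by rewrite cardFq.
pose x (j : 'I_r) : Fq := enum_val (widen_ord hr j).
have injx : injective x.
  by move=> j1 j2 /enum_val_inj /(congr1 val) /= /val_inj.
have hg : (g <= #|E'|)%N by rewrite cE cardFq.
pose al (i : 'I_g) : E' := enum_val (widen_ord hg i).
have injal : injective al.
  by move=> j1 j2 /enum_val_inj /(congr1 val) /= /val_inj.
pose e := vbasis (fullv : {vspace E}).
pose b := vbasis (fullv : {vspace L}).
pose psi (j : 'I_r) : E := \sum_(s < \dim {:E}) (x j ^+ s) *: e`_s.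
pose th (i : 'I_g) : L := \sum_(k < \dim {:L}) (al i ^+ k) *: b`_k.
pose gam i j : L := (psi j : E') *: th i.
pose iota : {rmorphism Fq -> L} := in_alg L \o in_alg E.
exists (fun _ : 'I_g => \matrix_(s < a, j < r) iota (x j) ^+ s).
exists (fun i => \matrix_(u < h, j < r) gam i j ^+ (#|Fq| ^ u)).
apply: (@mr_core Fq L iota g r a h m x gam) => //.
- have [p [k [pp [k0 qe]]]] := pq.
  have pcharFq : p \in [pchar Fq] by apply: (@card_finPcharP _ p k); rewrite ?cardFq.
  have pcharL : p \in [pchar L] := rmorph_pchar iota pcharFq.
  move=> y z; apply: exprDn_pchar.
  by rewrite cardFq qe (eq_pnat _ (pcharf_eq pcharL)) pnatX pnat_id.
- move=> z hcnt hw hsum.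
  pose eps (i : 'I_g) : E := \sum_j z i j *: psi j.
  have hs : \sum_i (eps i : E') *: th i = 0.
    rewrite -[RHS]hsum; apply: eq_bigr => i _; rewrite /eps scaler_suml.
    apply: eq_bigr => j _; rewrite /gam /iota /=.
    by rewrite mulr_algl scalerA mulr_algl.
  have hk : forall k : 'I_(\dim {:L}), \sum_i (eps i : E') * al i ^+ k = 0.
    have fb : free b := basis_free (vbasisP fullv).
    move/freeP: fb => fb; apply: (fb (fun k => \sum_i (eps i : E') * al i ^+ k)).
    rewrite -[RHS]hs /th; under [RHS]eq_bigr do rewrite scaler_sumr.
    rewrite [RHS]exchange_big; apply: eq_bigr => k _; rewrite scaler_suml.
    by apply: eq_bigr => i _; rewrite scalerA.
  have eps0 : forall i, eps i = 0.
    move=> i; apply: (@vdm E' _ al (fun i => eps i) (\dim {:L})) => //.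
    - rewrite dL; apply: leq_trans hcnt; apply: subset_leq_card; apply/subsetP => i'.
      rewrite !inE; apply: contraR; rewrite negb_exists => /forallP hz.
      apply/eqP; rewrite /eps big1 // => j _.
      by move: (hz j); rewrite negbK => /eqP ->; rewrite scale0r.
    - move=> s hs'; exact: (hk (Ordinal hs')).
  move=> i; apply: (@vdm Fq _ x (z i) (\dim {:E})) => //.
  - by rewrite dE; apply: hw.
  - move=> s hs'.
    have fe : free e := basis_free (vbasisP fullv).
    move/freeP: fe => fe; apply: (fe (fun s => \sum_j z i j * x j ^+ s) _ (Ordinal hs')).
    rewrite -[RHS](eps0 i) /eps /psi; under [RHS]eq_bigr do rewrite scaler_sumr.
    rewrite [RHS]exchange_big; apply: eq_bigr => s' _; rewrite scaler_suml.
    by apply: eq_bigr => j _; rewrite scalerA.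
Qed.
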